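(* In any finite ELP, let $\pi$ be a policy, $\rho_\pi$ its stationary distribution, and define $\lambda_\pi(s,a)=\rho_\pi(s)\pi(a|s)\mathbb E_\pi[T]$. Then for every $Q\in\mathcal Q$, $$\mathcal L_\pi(Q,\lambda_\pi)=J(\pi)+\sum_{s\notin\mathcal S_\bot}\sum_{a\in\mathcal A}\lambda_\pi(s,a)\Big(\max_{\bar a}Q(s,\bar a)-Q(s,a)\Big).$$
   Context: A finite ELP is $(\mathcal S,\mathcal A,P,R,\rho)$ with finite $\mathcal S,\mathcal A$, reward $R:\mathcal S\to\mathbb R$, transitions $P(s'|s,a)$, distribution $\rho$, and nonempty terminal set $\mathcal S_\bot$. Under a policy $\pi$, $S_0$ is a fixed terminal state, $A_t\sim\pi(\cdot|S_t)$, $S_{t+1}\sim P(\cdot|S_t,A_t)$, and $T=\inf\{t\ge1:S_t\in\mathcal S_\bot\}$. ELP conditions: $\mathbb E_\pi[T]<\infty$ for every $\pi$; $P(s'|s,a)=\rho(s')$ for all $s\in\mathcal S_\bot$, all $a,s'$; every state is reachable under some policy. $J(\pi)=\mathbb E_\pi[\sum_{t=1}^TR(S_t)]$. $\mathcal Q$ = all functions $\mathcal S\times\mathcal A\to\mathbb R$. $\mathcal BQ(s,a)=\sum_{s'}P(s'|s,a)\big(R(s')+\mathbf 1[s'\notin\mathcal S_\bot]\max_{a'}Q(s',a')\big)$. $\mathcal L_\pi(Q,\lambda)=\mathbb E_\pi[Q(S_T,A_T)]+\sum_{s,a}\lambda(s,a)(\mathcal BQ(s,a)-Q(s,a))$ with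 $A_T\sim\pi(\cdot|S_T)$. In a finite ELP, the Markov chain on $\mathcal S$ with kernel $\sum_aP(s'|s,a)\pi(a|s)$ has a unique stationary distribution, denoted $\rho_\pi$. *)

(* Defs.v *)
From HB Require Import structures.
From mathcomp Require Import all_boot all_order all_algebra.
From mathcomp Require Import all_classical all_reals topology normedtype sequences.
Set Implicit Arguments. Unset Strict Implicit. Unset Printing Implicit Defensive.
Import Order.TTheory GRing.Theory Num.Theory numFieldNormedType.Exports.
Local Open Scope ring_scope.

Section ELP.
Variables (R : realType) (S A : finType).

Definition is_dist (T : finType) (d : T -> R) : Prop :=
  (forall x, 0 <= d x) /\ \sum_(x : T) d x = 1.

(* transition kernel P s a s' = P(s'|s,a) ; policy pi s a = pi(a|s) *)
Definition is_kernel (P : S -> A -> S -> R) : Prop := forall s a, is_dist (P s a).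
Definition is_policy (pi : S -> A -> R) : Prop := forall s, is_dist (pi s).

Definition ssum (u : nat -> R) : R := limn (series u).
Definition summable (u : nat -> R) : Prop := cvgn (series u).

(* a trajectory prefix (S_0,A_0),...,(S_n,A_n) *)
Definition traj (n : nat) := {ffun 'I_n.+1 -> (S * A)%type}.
Definition st n (w : traj n) (i : nat) : S := (w (inord i)).1.
Definition act n (w : traj n) (i : nat) : A := (w (inord i)).2.

Variables (P : S -> A -> S -> R) (term : {set S}) (s0 : S).

Definition path_prob (pi : S -> A -> R) n (w : traj n) : R :=
  (st w 0 == s0)%:R * pi (st w 0) (act w 0) *
  \prod_(i < n) (P (st w i) (act w i) (st w i.+1) * pi (st w i.+1) (act w i.+1)).

(* the event {T = n}, T = inf { t >= 1 : S_t terminal } *)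
Definition stops_at n (w : traj n) : bool :=
  (0 < n)%N && [forall i : 'I_n, (0 < i)%N ==> (st w i \notin term)]
  && (st w n \in term).

(* E_pi[ g(T, (S_0,A_0,...,S_T,A_T)) ; T < oo ] *)
Definition Estop (pi : S -> A -> R) (g : forall n, traj n -> R) : R :=
  ssum (fun n => \sum_(w : traj n | stops_at w) path_prob pi w * g n w).

Definition summable_stop (pi : S -> A -> R) (g : forall n, traj n -> R) : Prop :=
  summable (fun n => \sum_(w : traj n | stops_at w) path_prob pi w * g n w).

Definition ProbT_finite pi : R := Estop pi (fun _ _ => 1).
Definition ET pi : R := Estop pi (fun n _ => n%:R).
Definition Jret (Rw : S -> R) pi : R :=
  Estop pi (fun n w => \sum_(1 <= t < n.+1) Rw (st w t)).
Definition EQT (Q : S -> A -> R) pi : R :=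
  Estop pi (fun n w => Q (st w n) (act w n)).

(* P_pi(S_t = s) for the (unstopped) process *)
Definition prob_state pi t (s : S) : R :=
  \sum_(w : traj t | st w t == s) path_prob pi w.

(* max_a Q(s,a) (A is nonempty whenever a policy exists) *)
Definition qmax (Q : S -> A -> R) (s : S) : R :=
  if [pick a : A] is Some a0 then \big[Num.max/Q s a0]_(a : A) Q s a else 0.

Definition bellman (Rw : S -> R) (Q : S -> A -> R) (s : S) (a : A) : R :=
  \sum_(s' : S) P s a s' * (Rw s' + (s' \notin term)%:R * qmax Q s').

Definition lagr (Rw : S -> R) pi (Q : S -> A -> R) (lam : S -> A -> R) : R :=
  EQT Q pi + \sum_(s : S) \sum_(a : A) lam s a * (bellman Rw Q s a - Q s a).

Definition is_stationary pi (d : S -> R) : Prop :=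
  is_dist d /\ forall s', d s' = \sum_(s : S) \sum_(a : A) P s a s' * pi s a * d s.

Definition is_ELP (Rw : S -> R) (rho : S -> R) : Prop :=
  [/\ is_kernel P, is_dist rho, term != finset.set0 /\ s0 \in term,
      (forall s a, s \in term -> forall s', P s a s' = rho s')
    & (forall pi, is_policy pi ->
         ProbT_finite pi = 1 /\ summable_stop pi (fun n _ => n%:R))] /\
  (forall s, exists pi, is_policy pi /\ exists t, 0 < prob_state pi t s).

End ELP.

(* Main.v *)
Require Import Defs.
From HB Require Import structures.
From mathcomp Require Import all_boot all_order all_algebra.
From mathcomp Require Import all_classical all_reals topology normedtype sequences.
From mathcomp Require Import ring lra.
Import Order.TTheory GRing.Theory Num.Theory numFieldNormedType.Exports.
Local Open Scope ring_scope.
Set Implicit Arguments. Unset Strict Implicit. Unset Printing Implicit Defensive.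
Section Traj.
Variables (S A : finType).

Definition ext n (w : traj S A n) (x : (S * A)%type) : traj S A n.+1 :=
  [ffun i : 'I_n.+2 => if unlift ord_max i is Some j then w j else x].
Definition restr n (w : traj S A n.+1) : traj S A n :=
  [ffun j : 'I_n.+1 => w (lift ord_max j)].

Lemma sum_trajS (R : realType) n (F : traj S A n.+1 -> R) :
  \sum_(w : traj S A n.+1) F w = \sum_(w : traj S A n) \sum_(x : S * A) F (ext w x).
Proof.
rewrite pair_big /=.
rewrite (reindex (fun p : traj S A n * (S * A) => ext p.1 p.2)) //=.
exists (fun w => (restr w, w ord_max)).
  move=> [w x] _ /=; congr pair.
    by apply/ffunP => j; rewrite !ffunE liftK.
  by rewrite ffunE unlift_none.
move=> w _ /=; apply/ffunP => i; rewrite ffunE.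
by case: unliftP => [j ->|->]; rewrite ?ffunE.
Qed.

Lemma sum_traj0 (R : realType) (F : traj S A 0 -> R) :
  \sum_(w : traj S A 0) F w = \sum_(x : S * A) F [ffun => x].
Proof.
rewrite (reindex (fun x : S * A => [ffun => x] : traj S A 0)) //=.
exists (fun w : traj S A 0 => w ord0).
  by move=> x _; rewrite ffunE.
by move=> w _; apply/ffunP => i; rewrite ffunE (ord1 i).
Qed.

Lemma st_ext n (w : traj S A n) x i : (i <= n)%N -> st (ext w x) i = st w i.
Proof.
move=> hi; rewrite /st ffunE.
have -> : (inord i : 'I_n.+2) = lift ord_max (inord i : 'I_n.+1).
  apply: val_inj; rewrite /= /bump /= !inordK //; last by rewrite ltnS (leq_trans hi).
  by rewrite leqNgt ltnS hi.
by rewrite liftK.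
Qed.

Lemma act_ext n (w : traj S A n) x i : (i <= n)%N -> act (ext w x) i = act w i.
Proof.
move=> hi; rewrite /act ffunE.
have -> : (inord i : 'I_n.+2) = lift ord_max (inord i : 'I_n.+1).
  apply: val_inj; rewrite /= /bump /= !inordK //; last by rewrite ltnS (leq_trans hi).
  by rewrite leqNgt ltnS hi.
by rewrite liftK.
Qed.

Lemma st_ext_last n (w : traj S A n) x : st (ext w x) n.+1 = x.1.
Proof.
rewrite /st ffunE.
have -> : (inord n.+1 : 'I_n.+2) = ord_max by apply: val_inj; rewrite /= inordK.
by rewrite unlift_none.
Qed.

Lemma act_ext_last n (w : traj S A n) x : act (ext w x) n.+1 = x.2.
Proof.
rewrite /act ffunE.
have -> : (inord n.+1 : 'I_n.+2) = ord_max by apply: val_inj; rewrite /= inordK.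
by rewrite unlift_none.
Qed.

Lemma sum_pair (R : realType) (F : S * A -> R) :
  \sum_(x : S * A) F x = \sum_s \sum_a F (s, a).
Proof. by rewrite pair_big /=; apply: eq_bigr => -[]. Qed.

Lemma st0 (x : S * A) i : st ([ffun => x] : traj S A 0) i = x.1.
Proof. by rewrite /st ffunE. Qed.
Lemma act0 (x : S * A) i : act ([ffun => x] : traj S A 0) i = x.2.
Proof. by rewrite /act ffunE. Qed.

End Traj.
Section PP.
Variables (R : realType) (S A : finType) (P : S -> A -> S -> R) (s0 : S).
Variable (pi : S -> A -> R).

Definition Kp (s s' : S) : R := \sum_a pi s a * P s a s'.

Fixpoint Fv (c : nat -> S -> R) (n : nat) (s' : S) : R :=
  if n is m.+1 then \sum_s Fv c m s * c m s * Kp s s' else (s' == s0)%:R.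

Fixpoint Bv (c : nat -> S -> R) (Rw : S -> R) (n : nat) (s' : S) : R :=
  if n is m.+1 then \sum_s Bv c Rw m s * c m s * Kp s s' + Fv c m.+1 s' * Rw s'
  else 0.

Lemma path_prob_ext n (w : traj S A n) x :
  path_prob P s0 pi (ext w x) =
  path_prob P s0 pi w * (P (st w n) (act w n) x.1 * pi x.1 x.2).
Proof.
rewrite /path_prob big_ord_recr /= st_ext // act_ext // -!mulrA; congr (_ * (_ * _)).
rewrite st_ext // act_ext // st_ext_last act_ext_last; congr (_ * _).
apply: eq_bigr => i _.
by rewrite !st_ext ?act_ext // ?(ltnW (ltn_ord i)) // ltn_ord.
Qed.

Lemma step_alg (V : S -> R) (cn : S -> R) (L : S -> A -> R) :
  \sum_s V s * \sum_a pi s a * (cn s * \sum_s' \sum_a' P s a s' * pi s' a' * L s' a') =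
  \sum_s' (\sum_s V s * cn s * Kp s s') * \sum_a' pi s' a' * L s' a'.
Proof.
pose T := fun s a s' a' => V s * cn s * pi s a * P s a s' * pi s' a' * L s' a'.
transitivity (\sum_s \sum_a \sum_s' \sum_a' T s a s' a').
  apply: eq_bigr => s _; rewrite !mulr_sumr; apply: eq_bigr => a _.
  rewrite !mulr_sumr; apply: eq_bigr => s' _.
  rewrite !mulr_sumr; apply: eq_bigr => a' _.
  by rewrite /T; ring.
transitivity (\sum_s' \sum_s \sum_a \sum_a' T s a s' a'); last first.
  apply: eq_bigr => s' _; rewrite mulr_suml; apply: eq_bigr => s _.
  have -> : V s * cn s * Kp s s' = \sum_a V s * cn s * pi s a * P s a s'.
    by rewrite /Kp mulr_sumr; apply: eq_bigr => a _; ring.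
  rewrite mulr_suml; apply: eq_bigr => a _.
  rewrite mulr_sumr; apply: eq_bigr => a' _.
  by rewrite /T; ring.
rewrite [RHS]exchange_big /=; apply: eq_bigr => s _.
by rewrite exchange_big.
Qed.

Lemma PP1 (c : nat -> S -> R) n (L : S -> A -> R) :
  \sum_(w : traj S A n) path_prob P s0 pi w * (\prod_(i < n) c i (st w i)) *
     L (st w n) (act w n) =
  \sum_s Fv c n s * \sum_a pi s a * L s a.
Proof.
elim: n L => [|n IH] L.
  rewrite sum_traj0 sum_pair.
  apply: eq_bigr => s _; rewrite mulr_sumr; apply: eq_bigr => a _.
  by rewrite /path_prob !st0 !act0 !big_ord0 !mulr1 mulrA.
rewrite sum_trajS.
pose L' := fun s a => c n s * \sum_s' \sum_a' P s a s' * pi s' a' * L s' a'.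
transitivity (\sum_(w : traj S A n) path_prob P s0 pi w * (\prod_(i < n) c i (st w i)) *
     L' (st w n) (act w n)).
  apply: eq_bigr => w _.
  rewrite sum_pair /L'.
  rewrite !mulr_sumr; apply: eq_bigr => s _; rewrite !mulr_sumr; apply: eq_bigr => a _.
  rewrite path_prob_ext big_ord_recr /= st_ext_last act_ext_last st_ext //.
  rewrite (eq_bigr (fun i : 'I_n => c i (st w i))); last first.
    by move=> i _; rewrite st_ext // ltnW.
  by rewrite /=; ring.
by rewrite IH /L' /= step_alg.
Qed.

Lemma PP2 (c : nat -> S -> R) (Rw : S -> R) n (L : S -> A -> R) :
  \sum_(w : traj S A n) path_prob P s0 pi w * (\prod_(i < n) c i (st w i)) *
     (\sum_(1 <= t < n.+1) Rw (st w t)) * L (st w n) (act w n) =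
  \sum_s Bv c Rw n s * \sum_a pi s a * L s a.
Proof.
elim: n L => [|n IH] L.
  rewrite big1 /=; last by move=> w _; rewrite big_geq // mulr0 mul0r.
  by rewrite big1 // => s _; rewrite mul0r.
transitivity (
  \sum_(w : traj S A n.+1) path_prob P s0 pi w * (\prod_(i < n.+1) c i (st w i)) *
     (\sum_(1 <= t < n.+1) Rw (st w t)) * L (st w n.+1) (act w n.+1) +
  \sum_(w : traj S A n.+1) path_prob P s0 pi w * (\prod_(i < n.+1) c i (st w i)) *
     (fun s a => Rw s * L s a) (st w n.+1) (act w n.+1)).
  rewrite -big_split /=; apply: eq_bigr => w _.
  by rewrite big_nat_recr //=; ring.
rewrite (PP1 c n.+1 (fun s a => Rw s * L s a)).
pose L' := fun s a => c n s * \sum_s' \sum_a' P s a s' * pi s' a' * L s' a'.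
rewrite sum_trajS.
transitivity (\sum_(w : traj S A n) path_prob P s0 pi w * (\prod_(i < n) c i (st w i)) *
     (\sum_(1 <= t < n.+1) Rw (st w t)) * L' (st w n) (act w n) +
  \sum_s Fv c n.+1 s * \sum_a pi s a * (Rw s * L s a)).
  congr (_ + _).
  apply: eq_bigr => w _.
  set X := (\sum_(1 <= t < n.+1) Rw (st w t)).
  rewrite sum_pair /L' !mulr_sumr; apply: eq_bigr => s _; rewrite !mulr_sumr; apply: eq_bigr => a _.
  rewrite path_prob_ext big_ord_recr /= st_ext_last act_ext_last st_ext //.
  rewrite (eq_bigr (fun i : 'I_n => c i (st w i))); last first.
    by move=> i _; rewrite st_ext // ltnW.
  rewrite (@eq_big_nat _ _ _ 1 n.+1 _ (fun t => Rw (st w t))); last first.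
    by move=> t /andP[_ ht]; rewrite st_ext.
  have hX : \sum_(1 <= i < n.+1) path_prob P s0 pi w * \prod_(i0 < n) c i0 (st w i0) * Rw (st w i)
     = path_prob P s0 pi w * \prod_(i0 < n) c i0 (st w i0) * X by rewrite /X mulr_sumr.
  by rewrite -/X hX /=; ring.
rewrite IH /L' step_alg -big_split /=; apply: eq_bigr => s _.
rewrite mulrDl; congr (_ + _); rewrite -mulrA; congr (_ * _).
by rewrite mulr_sumr; apply: eq_bigr => a _; ring.
Qed.
End PP.
Section Terms.
Variables (R : realType) (S A : finType) (P : S -> A -> S -> R) (term : {set S}) (s0 : S).
Variable (pi : S -> A -> R).

Definition ck (i : nat) (s : S) : R := if i == 0%N then 1 else (s \notin term)%:R.
Definition tau (s : S) : R := (s \in term)%:R.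

Lemma prod_forall n (w : traj S A n) :
  \prod_(i < n) ck i (st w i) =
  [forall i : 'I_n, (0 < i)%N ==> (st w i \notin term)]%:R.
Proof.
case: forallP => h.
  rewrite big1 // => i _; rewrite /ck; case: eqP => // /eqP i0.
  by move: (h i); rewrite lt0n i0 /= => ->.
move/forallP: h; rewrite negb_forall => /existsP[i]; rewrite negb_imply => /andP[i0 hi].
rewrite (bigD1 i) //= /ck; move: i0; rewrite lt0n => /negPf ->.
by rewrite (negPf hi) mul0r.
Qed.

Lemma stops_ind n (w : traj S A n) :
  (stops_at term w)%:R = (0 < n)%:R * (\prod_(i < n) ck i (st w i)) * tau (st w n).
Proof.
rewrite prod_forall /stops_at /tau.
by case: (0 < n)%N; case: [forall _, _]; case: (_ \in _); rewrite /= ?mul0r ?mulr0 ?mulr1.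
Qed.

Lemma sum_stops_gen n (G : traj S A n -> R) :
  \sum_(w : traj S A n | stops_at term w) path_prob P s0 pi w * G w =
  (0 < n)%:R * \sum_(w : traj S A n) path_prob P s0 pi w * (\prod_(i < n) ck i (st w i)) *
     (G w * tau (st w n)).
Proof.
rewrite big_mkcond /= mulr_sumr; apply: eq_bigr => w _.
transitivity (path_prob P s0 pi w * G w * (stops_at term w)%:R).
  by case: stops_at; rewrite /= ?mulr1 ?mulr0.
by rewrite stops_ind; ring.
Qed.

Lemma term_L n (L : S -> A -> R) :
  \sum_(w : traj S A n | stops_at term w) path_prob P s0 pi w * L (st w n) (act w n) =
  (0 < n)%:R * \sum_s Fv P s0 pi ck n s * \sum_a pi s a * (L s a * tau s).
Proof.
rewrite sum_stops_gen; congr (_ * _).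
by rewrite -(PP1 P s0 pi ck n (fun s a => L s a * tau s)).
Qed.

Lemma term_R n (Rw : S -> R) :
  \sum_(w : traj S A n | stops_at term w) path_prob P s0 pi w * \sum_(1 <= t < n.+1) Rw (st w t) =
  (0 < n)%:R * \sum_s Bv P s0 pi ck Rw n s * \sum_a pi s a * tau s.
Proof.
rewrite sum_stops_gen; congr (_ * _).
rewrite -(PP2 P s0 pi ck Rw n (fun s a => tau s)).
by apply: eq_bigr => w _; rewrite mulrA.
Qed.

End Terms.
Section Fin.
Variables (R : realType) (S A : finType) (P : S -> A -> S -> R) (term : {set S}) (s0 : S).
Variables (rho : S -> R) (pi : S -> A -> R).
Hypothesis hP : is_kernel P.
Hypothesis hpi : is_policy pi.
Hypothesis hterm : forall s a, s \in term -> forall s', P s a s' = rho s'.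
Hypothesis hs0 : s0 \in term.

Local Notation taut := (@tau R S term).
Local Notation ckt := (@ck R S term).
Local Notation K := (@Kp R S A P pi).
Local Notation H := (@Fv R S A P s0 pi ckt).
Local Notation B := (@Bv R S A P s0 pi ckt).

Lemma Kp_ge0 s s' : 0 <= K s s'.
Proof.
apply: sumr_ge0 => a _; apply: mulr_ge0; first by case: (hpi s) => ->.
by case: (hP s a) => ->.
Qed.

Lemma Kp_sum1 s : \sum_s' K s s' = 1.
Proof.
rewrite /Kp exchange_big /=; case: (hpi s) => _ <-; apply: eq_bigr => a _.
by rewrite -mulr_sumr; case: (hP s a) => _ ->; rewrite mulr1.
Qed.

Lemma Kp_term s s' : s \in term -> K s s' = rho s'.
Proof.
move=> hs; rewrite /Kp (eq_bigr (fun a => pi s a * rho s')); last by move=> a _; rewrite hterm.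
by rewrite -mulr_suml; case: (hpi s) => _ ->; rewrite mul1r.
Qed.

Lemma pi_sum1 s : \sum_a pi s a = 1.
Proof. by case: (hpi s). Qed.

Lemma ck_ge0 i s : 0 <= ckt i s.
Proof. by rewrite /ck; case: eqP => // _; rewrite ler0n. Qed.

Lemma tau_ge0 s : 0 <= taut s.
Proof. by rewrite /tau ler0n. Qed.

Lemma ckE i s : ckt i s = 1 - (0 < i)%:R * taut s.
Proof.
rewrite /ck /tau; case: i => [|i] /=; first by rewrite mul0r subr0.
by rewrite mul1r; case: (s \in term) => /=; rewrite ?subrr ?subr0.
Qed.

Lemma H_ge0 n s : 0 <= H n s.
Proof.
elim: n s => [|n IH] s /=; first by rewrite ler0n.
apply: sumr_ge0 => x _; apply: mulr_ge0; last exact: Kp_ge0.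
by apply: mulr_ge0 => //; exact: ck_ge0.
Qed.

Lemma sum_vK (V : S -> R) n :
  \sum_s' \sum_s V s * ckt n s * K s s' =
  \sum_s V s - (0 < n)%:R * \sum_s V s * taut s.
Proof.
rewrite exchange_big /= mulr_sumr -sumrB; apply: eq_bigr => s _.
by rewrite -mulr_sumr Kp_sum1 mulr1 ckE; ring.
Qed.

Lemma H_sum n : \sum_s H n.+1 s = \sum_s H n s - (0 < n)%:R * \sum_s H n s * taut s.
Proof. by rewrite /= sum_vK. Qed.

Lemma H_sum0 : \sum_s H 0 s = 1.
Proof.
rewrite /= (bigD1 s0) //= eqxx big1 ?addr0 // => s /negPf hs.
by rewrite hs.
Qed.

Lemma B_sum (Rw : S -> R) n : \sum_s B Rw n.+1 s =
  \sum_s B Rw n s - (0 < n)%:R * \sum_s B Rw n s * taut s + \sum_s H n.+1 s * Rw s.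
Proof. by rewrite /= big_split /= sum_vK. Qed.

Lemma B1 n s : B (fun _ => 1) n s = n%:R * H n s.
Proof.
elim: n s => [|n IH] s /=; first by rewrite mul0r.
rewrite (eq_bigr (fun x => n%:R * (H n x * ckt n x * K x s))); last first.
  by move=> x _; rewrite IH; ring.
by rewrite -mulr_sumr -/(Fv P s0 pi (ckt) n.+1 s) mulr1 -nat1r; ring.
Qed.

Lemma le_sum_abs (f : S -> R) s : `|f s| <= \sum_x `|f x|.
Proof.
by rewrite (bigD1 s) //= lerDl sumr_ge0.
Qed.

Lemma B_bound (Rw : S -> R) n s :
  `|B Rw n s| <= (\sum_x `|Rw x|) * n%:R * H n s.
Proof.
set C := \sum_x `|Rw x|.
elim: n s => [|n IH] s /=; first by rewrite normr0 mulr0 mul0r.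
apply: (le_trans (ler_normD _ _)).
have h1 : `|\sum_x B Rw n x * ckt n x * K x s| <=
          C * n%:R * \sum_x H n x * ckt n x * K x s.
  apply: (le_trans (ler_norm_sum _ _ _)); rewrite mulr_sumr; apply: ler_sum => x _.
  rewrite !normrM (ger0_norm (ck_ge0 _ _)) (ger0_norm (Kp_ge0 _ _)).
  rewrite !mulrA; apply: ler_wpM2r; first exact: Kp_ge0.
  by apply: ler_wpM2r; [exact: ck_ge0 | exact: IH].
have h2 : `|Fv P s0 pi (ckt) n.+1 s * Rw s| <= C * Fv P s0 pi (ckt) n.+1 s.
  rewrite normrM (ger0_norm (H_ge0 _ _)) mulrC; apply: ler_wpM2r; first exact: H_ge0.
  exact: le_sum_abs.
apply: (le_trans (lerD h1 h2)).
by rewrite -/(Fv P s0 pi (ckt) n.+1 s) -nat1r; rewrite le_eqVlt; apply/orP; left; apply/eqP; ring.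
Qed.

End Fin.
Local Open Scope classical_set_scope.
Local Open Scope ring_scope.
Section Lim.
Variable (R : realType).

Lemma cvg_fsum (I : finType) (f : I -> nat -> R) (l : I -> R) :
  (forall i, f i n @[n --> \oo] --> l i) ->
  (\sum_i f i n) @[n --> \oo] --> \sum_i l i.
Proof.
move=> h.
have: forall r : seq I, (\sum_(i <- r) f i n) @[n --> \oo] --> \sum_(i <- r) l i.
  elim => [|i r IH].
    rewrite big_nil; under eq_fun do rewrite big_nil; exact: cvg_cst.
  rewrite big_cons; under eq_fun do rewrite big_cons; exact: cvgD.
by apply.
Qed.

Lemma nd_cvg (u : nat -> R) (M : R) :
  (forall n, u n <= u n.+1) -> (forall n, u n <= M) -> cvgn u.
Proof.
move=> hu hM; apply: nondecreasing_is_cvgn.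
  by apply/nondecreasing_seqP.
by exists M => _ [n _ <-]; exact: hM.
Qed.

Lemma nd_le_lim (u : nat -> R) l n :
  (forall n, u n <= u n.+1) -> u m @[m --> \oo] --> l -> u n <= l.
Proof.
move=> hu hl; have hc : cvgn u by apply/cvg_ex; exists l.
have := nondecreasing_cvgn_le ((nondecreasing_seqP u).1 hu) hc n.
by rewrite (cvg_lim _ hl).
Qed.

End Lim.
Section Main.
Variables (R : realType) (S A : finType) (P : S -> A -> S -> R) (term : {set S}) (s0 : S).
Variables (rho : S -> R) (pi : S -> A -> R).
Hypothesis hP : is_kernel P.
Hypothesis hpi : is_policy pi.
Hypothesis hterm : forall s a, s \in term -> forall s', P s a s' = rho s'.
Hypothesis hs0 : s0 \in term.

Local Notation taut := (@tau R S term).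
Local Notation ckt := (@ck R S term).
Local Notation K := (@Kp R S A P pi).
Local Notation H := (@Fv R S A P s0 pi ckt).
Local Notation B := (@Bv R S A P s0 pi ckt).

Definition pt n := (0 < n)%:R * \sum_s H n s * taut s.
Definition npt n := n%:R * pt n.
Definition jt Rw n := (0 < n)%:R * \sum_s B Rw n s * taut s.
Definition mu n s := \sum_(t < n) H t.+1 s.

Lemma pt_ge0 n : 0 <= pt n.
Proof.
apply: mulr_ge0; first exact: ler0n.
by apply: sumr_ge0 => s _; apply: mulr_ge0; [exact: (H_ge0 _ _ hP hpi) | exact: tau_ge0].
Qed.

Lemma tau_pi s : \sum_a pi s a * taut s = taut s.
Proof. by rewrite -mulr_suml (pi_sum1 hpi) mul1r. Qed.

Lemma stop_pt n : \sum_(w : traj S A n | stops_at term w) path_prob P s0 pi w * 1 = pt n.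
Proof.
rewrite (@term_L R S A P term s0 pi n (fun _ _ => 1)) /pt; congr (_ * _).
by apply: eq_bigr => s _; under eq_bigr do rewrite mul1r; rewrite tau_pi.
Qed.

Lemma stop_npt n : \sum_(w : traj S A n | stops_at term w) path_prob P s0 pi w * n%:R = npt n.
Proof.
rewrite /npt -stop_pt mulr_sumr; apply: eq_bigr => w _; ring.
Qed.

Lemma stop_jt Rw n : \sum_(w : traj S A n | stops_at term w)
   path_prob P s0 pi w * \sum_(1 <= t < n.+1) Rw (st w t) = jt Rw n.
Proof.
rewrite term_R /jt; congr (_ * _).
by apply: eq_bigr => s _; rewrite tau_pi.
Qed.

Lemma q_eq n : \sum_s H n s = 1 - series pt n.
Proof.
elim: n => [|n IH]; first by rewrite H_sum0 /series /= big_geq // subr0.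
by rewrite (H_sum term s0 hP hpi) IH seriesSr /pt; ring.
Qed.

Lemma q_ge0 n : 0 <= \sum_s H n s.
Proof. by apply: sumr_ge0 => s _; exact: (H_ge0 _ _ hP hpi). Qed.

Lemma series_pt_nd n : series pt n <= series pt n.+1.
Proof. by rewrite seriesSr lerDl pt_ge0. Qed.

Hypothesis hT : ProbT_finite P term s0 pi = 1.
Hypothesis hE : summable_stop P term s0 pi (fun n _ => n%:R).

Lemma series_pt_cvg : series pt n @[n --> \oo] --> (1 : R).
Proof.
have hc : cvgn (series pt).
  apply: (@nd_cvg _ _ 1) => [n|n]; first exact: series_pt_nd.
  by have := q_ge0 n; rewrite q_eq subr_ge0.
rewrite -hT /ProbT_finite /Estop /ssum.
have -> : (fun n => \sum_(w : traj S A n | stops_at term w) path_prob P s0 pi w * 1) = pt.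
  by apply: funext => n; exact: stop_pt.
exact: hc.
Qed.

Lemma npt_cvg : cvgn (series npt).
Proof.
move: hE; rewrite /summable_stop /summable.
have -> : (fun n => \sum_(w : traj S A n | stops_at term w) path_prob P s0 pi w * n%:R) = npt.
  by apply: funext => n; exact: stop_npt.
by [].
Qed.

Definition E := limn (series npt).

Lemma npt_ge0 n : 0 <= npt n.
Proof. by apply: mulr_ge0; [exact: ler0n | exact: pt_ge0]. Qed.

Lemma key n : n%:R * \sum_s H n s <= E - series npt n.
Proof.
rewrite q_eq.
have h1 : n%:R * (series pt m - series pt n) @[m --> \oo] --> n%:R * (1 - series pt n).
  apply: cvgMr; apply: cvgB; [exact: series_pt_cvg | exact: cvg_cst].
have h2 : series npt m - series npt n @[m --> \oo] --> E - series npt n.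
  apply: cvgB; [exact: npt_cvg | exact: cvg_cst].
apply: (ler_cvg_to h1 h2).
near=> m.
have hnm : (n <= m)%N by near: m; exists n.
rewrite !sub_series_geq // mulr_sumr; apply: ler_sum_nat => k /andP[hk _].
rewrite /npt; apply: ler_wpM2r; first exact: pt_ge0.
by rewrite ler_nat.
Unshelve. all: by end_near.
Qed.


Lemma snpt_le n : series npt n <= E.
Proof.
apply: (nd_le_lim (u := series npt)); last exact: npt_cvg.
by move=> m; rewrite seriesSr lerDl npt_ge0.
Qed.

Lemma nq_cvg : n%:R * \sum_s H n s @[n --> \oo] --> (0 : R).
Proof.
apply: (squeeze_cvgr (f := fun _ => 0) (h := fun n => E - series npt n)).
- near=> n; apply/andP; split; last exact: key.
  by apply: mulr_ge0; [exact: ler0n | exact: q_ge0].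
- exact: cvg_cst.
- rewrite -(subrr E); apply: cvgB; [exact: cvg_cst | exact: npt_cvg].
Unshelve. all: by end_near.
Qed.

Lemma Bsum_cvg Rw : \sum_s B Rw n s @[n --> \oo] --> (0 : R).
Proof.
set C := \sum_x `|Rw x|.
have hb n : `|\sum_s B Rw n s| <= C * (n%:R * \sum_s H n s).
  apply: (le_trans (ler_norm_sum _ _ _)); rewrite !mulr_sumr; apply: ler_sum => s _.
  by rewrite mulrA; exact: (B_bound term s0 hP hpi).
have hC : C * (n%:R * \sum_s H n s) @[n --> \oo] --> (0 : R).
  rewrite -[X in _ --> X](mulr0 C); apply: cvgMr; exact: nq_cvg.
have hC' : - (C * (n%:R * \sum_s H n s)) @[n --> \oo] --> (0 : R).
  rewrite -[X in _ --> X]oppr0; exact: (cvgN hC).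
apply: (squeeze_cvgr _ hC' hC).
by near=> n; rewrite -ler_norml; exact: hb.
Unshelve. all: by end_near.
Qed.

Lemma jt_tele Rw N : series (jt Rw) N = \sum_s mu N s * Rw s - \sum_s B Rw N s.
Proof.
elim: N => [|N IH].
  rewrite /series /= big_geq // /mu.
  rewrite big1; last by move=> s _; rewrite big_ord0 mul0r.
  by rewrite big1 ?subr0.
rewrite seriesSr IH (B_sum term s0 hP hpi) /jt /mu.
under [X in _ = X - _]eq_bigr do rewrite big_ord_recr /= mulrDl.
rewrite big_split /=; ring.
Qed.

Lemma jt1 : jt (fun _ => 1) = npt.
Proof.
apply: funext => n; rewrite /jt /npt /pt.
under eq_bigr do rewrite B1.
rewrite (eq_bigr (fun s => n%:R * (H n s * taut s))); last by move=> s _; ring.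
by rewrite -mulr_sumr; ring.
Qed.

Lemma mu_ge0 n s : 0 <= mu n s.
Proof. by apply: sumr_ge0 => t _; exact: (H_ge0 _ _ hP hpi). Qed.

Lemma mu_sum_le n : \sum_s mu n s <= E.
Proof.
have := jt_tele (fun _ => 1) n; rewrite jt1.
under eq_bigr do rewrite mulr1.
under [X in _ = _ - X]eq_bigr do rewrite B1.
rewrite -mulr_sumr => h.
move: h (key n); set a := \sum_s mu n s; set b := n%:R * _; set c := series npt n; lra.
Qed.

Lemma mu_le n s : mu n s <= E.
Proof.
apply: le_trans (mu_sum_le n).
by rewrite (bigD1 s) //= lerDl sumr_ge0 // => x _; exact: mu_ge0.
Qed.

Lemma mu_nd n s : mu n s <= mu n.+1 s.
Proof. rewrite /mu big_ord_recr lerDl; exact: (H_ge0 _ _ hP hpi). Qed.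

Definition muL s := limn (fun n => mu n s).

Lemma mu_cvg s : mu n s @[n --> \oo] --> muL s.
Proof. exact: (nd_cvg (fun n => @mu_nd n s) (fun n => @mu_le n s)). Qed.

Lemma muL_ge0 s : 0 <= muL s.
Proof.
have h0 : (fun _ : nat => (0 : R)) x @[x --> \oo] --> (0 : R) by exact: cvg_cst.
apply: (ler_cvg_to h0 (@mu_cvg s)); near=> n; exact: mu_ge0.
Unshelve. all: by end_near.
Qed.

Lemma series_jt_cvg Rw : series (jt Rw) n @[n --> \oo] --> \sum_s muL s * Rw s.
Proof.
rewrite -[X in _ --> X]subr0.
under eq_fun do rewrite jt_tele.
apply: cvgB; last exact: Bsum_cvg.
apply: cvg_fsum => s; apply: cvgM; [exact: mu_cvg | exact: cvg_cst].
Qed.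

Lemma ET_eq : ET P term s0 pi = \sum_s muL s.
Proof.
rewrite /ET /Estop /ssum.
have -> : (fun n => \sum_(w : traj S A n | stops_at term w) path_prob P s0 pi w * n%:R) = npt.
  by apply: funext => n; exact: stop_npt.
rewrite -jt1; under [RHS]eq_bigr do rewrite -[muL _]mulr1.
apply: cvg_lim => //; exact: series_jt_cvg.
Qed.

Lemma J_eq Rw : Jret P term s0 Rw pi = \sum_s muL s * Rw s.
Proof.
rewrite /Jret /Estop /ssum.
have -> : (fun n => \sum_(w : traj S A n | stops_at term w) path_prob P s0 pi w *
   \sum_(1 <= t < n.+1) Rw (st w t)) = jt Rw.
  by apply: funext => n; exact: stop_jt.
apply: cvg_lim => //; exact: series_jt_cvg.
Qed.

Lemma EQT_eq Q : EQT P term s0 Q pi = \sum_s muL s * (\sum_a pi s a * (Q s a * taut s)).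
Proof.
rewrite /EQT /Estop /ssum.
set f := fun s => \sum_a pi s a * (Q s a * taut s).
have -> : (fun n => \sum_(w : traj S A n | stops_at term w) path_prob P s0 pi w *
   Q (st w n) (act w n)) = (fun n => (0 < n)%:R * \sum_s H n s * f s).
  by apply: funext => n; rewrite term_L.
set et := (fun n => _).
have he n : series et n.+1 = \sum_s mu n s * f s.
  elim: n => [|n IH].
    rewrite /series /= big_nat1 /et /= mul0r big1 // => s _.
    by rewrite /mu big_ord0 mul0r.
  rewrite seriesSr IH /et /mu /=; under [RHS]eq_bigr do rewrite big_ord_recr /= mulrDl.
  by rewrite big_split /= mul1r.
apply: cvg_lim => //; rewrite -cvg_shiftS /=.
under eq_fun do rewrite he.
apply: cvg_fsum => s; apply: cvgM; [exact: mu_cvg | exact: cvg_cst].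
Qed.

End Main.
Section Stat.
Variables (R : realType) (S A : finType) (P : S -> A -> S -> R) (term : {set S}) (s0 : S).
Variables (rho : S -> R) (pi : S -> A -> R) (d : S -> R).
Hypothesis hP : is_kernel P.
Hypothesis hpi : is_policy pi.
Hypothesis hterm : forall s a, s \in term -> forall s', P s a s' = rho s'.
Hypothesis hs0 : s0 \in term.
Hypothesis hT : ProbT_finite P term s0 pi = 1.
Hypothesis hE : summable_stop P term s0 pi (fun n _ => n%:R).
Hypothesis hstat : is_stationary P pi d.

Local Notation taut := (@tau R S term).
Local Notation ckt := (@ck R S term).
Local Notation K := (@Kp R S A P pi).
Local Notation H := (@Fv R S A P s0 pi ckt).
Local Notation muS := (@mu R S A P term s0 pi).
Local Notation muL := (@muL R S A P term s0 pi).

Definition alpha := \sum_s d s * taut s.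

Lemma ckS i s : ckt i.+1 s = ckt 1 s.
Proof. by []. Qed.

Lemma d_ge0 s : 0 <= d s.
Proof. by case: hstat => -[h _] _. Qed.

Lemma stat_K s' : d s' = \sum_s d s * K s s'.
Proof.
case: hstat => _ ->; apply: eq_bigr => s _.
by rewrite /Kp mulr_sumr; apply: eq_bigr => a _; ring.
Qed.

Lemma dK_split s' : \sum_s d s * ckt 1 s * K s s' = d s' - alpha * rho s'.
Proof.
rewrite [in d s']stat_K /alpha mulr_suml -sumrB; apply: eq_bigr => s _.
rewrite ckE /tau /=; case hs: (s \in term) => /=.
  by rewrite (Kp_term hpi hterm _ hs); ring.
by ring.
Qed.

Lemma H1 s' : H 1 s' = rho s'.
Proof.
rewrite /= (bigD1 s0) //= eqxx big1 ?addr0; first by rewrite /ck /= !mul1r (Kp_term hpi hterm).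
by move=> s /negPf ->; rewrite !mul0r.
Qed.

Lemma H_SS t s' : H t.+2 s' = \sum_s H t.+1 s * ckt 1 s * K s s'.
Proof. by []. Qed.

Lemma mu_recl m s' : muS m.+1 s' = rho s' + \sum_s muS m s * ckt 1 s * K s s'.
Proof.
rewrite /mu big_ord_recl; congr (_ + _); first exact: H1.
under [RHS]eq_bigr do rewrite mulr_suml mulr_suml.
rewrite [RHS]exchange_big /=; apply: eq_bigr => t _.
exact: (H_SS t s').
Qed.

Fixpoint Dv (m : nat) (s' : S) : R :=
  if m is k.+1 then \sum_s Dv k s * ckt 1 s * K s s' else d s'.

Lemma Dv_eq m s : Dv m s = d s - alpha * muS m s.
Proof.
elim: m s => [|m IH] s'.
  by rewrite /= /mu big_ord0 mulr0 subr0.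
rewrite /=; under eq_bigr do rewrite IH.
rewrite (eq_bigr (fun s => d s * ckt 1 s * K s s' - alpha * (muS m s * ckt 1 s * K s s'))); last first.
  by move=> s _; ring.
by rewrite sumrB dK_split -mulr_sumr mu_recl; ring.
Qed.

Lemma Dv_ge0 m s : 0 <= Dv m s.
Proof.
elim: m s => [|m IH] s' /=; first exact: d_ge0.
apply: sumr_ge0 => s _; apply: mulr_ge0; last exact: (Kp_ge0 hP hpi).
by apply: mulr_ge0 => //; exact: ck_ge0.
Qed.

Definition e s := d s - alpha * muL s.

Lemma Dv_cvg s : Dv m s @[m --> \oo] --> e s.
Proof.
under eq_fun do rewrite Dv_eq.
apply: cvgB; first exact: cvg_cst.
apply: cvgMr; exact: (@mu_cvg _ _ _ _ _ _ _ hP hpi hT hE s).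
Qed.

Lemma e_ge0 s : 0 <= e s.
Proof.
have h0 : (fun _ : nat => (0 : R)) x @[x --> \oo] --> (0 : R) by exact: cvg_cst.
apply: (ler_cvg_to h0 (@Dv_cvg s)); near=> n; exact: Dv_ge0.
Unshelve. all: by end_near.
Qed.

Lemma e_fix s' : e s' = \sum_s e s * ckt 1 s * K s s'.
Proof.
have h1 : Dv m.+1 s' @[m --> \oo] --> \sum_s e s * ckt 1 s * K s s'.
  rewrite /=; apply: cvg_fsum => s; apply: cvgM; last exact: cvg_cst.
  apply: cvgM; [exact: Dv_cvg | exact: cvg_cst].
have h2 : Dv m.+1 s' @[m --> \oo] --> e s'.
  by rewrite (cvg_shiftS (fun m => Dv m s')); exact: (@Dv_cvg _).
exact: (cvg_unique _ h2 h1).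
Qed.

Lemma e_sum : \sum_s' e s' = \sum_s e s * ckt 1 s.
Proof.
rewrite (eq_bigr _ (fun s' _ => e_fix s')) exchange_big /=; apply: eq_bigr => s _.
by rewrite -mulr_sumr (Kp_sum1 hP hpi) mulr1.
Qed.

Lemma e_term s : s \in term -> e s = 0.
Proof.
move=> hs.
have hsum : \sum_s e s * taut s = 0.
  have h := e_sum.
  have h2 : \sum_s e s * ckt 1 s = \sum_s e s - \sum_s e s * taut s.
    by rewrite -sumrB; apply: eq_bigr => x _; rewrite ckE /=; ring.
  by move: h; rewrite h2; set a := \sum_s e s; set b := \sum_s _; lra.
have hF : forall i, xpredT i -> 0 <= e i * taut i.
  by move=> x _; apply: mulr_ge0; [exact: e_ge0 | exact: tau_ge0].
have := @psumr_eq0P _ _ xpredT (fun s => e s * taut s) hF hsum s isT.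
by rewrite /tau hs mulr1.
Qed.


Lemma e_pos_nt s : 0 < e s -> s \notin term.
Proof. by move=> h; apply/negP => hs; move: h; rewrite e_term // ltxx. Qed.

Lemma e_closed s s' : 0 < e s -> 0 < K s s' -> 0 < e s'.
Proof.
move=> hs hK; rewrite e_fix (bigD1 s) //=.
set b := \sum_(i | _) _.
have hb : 0 <= b.
  apply: sumr_ge0 => x _; apply: mulr_ge0; last exact: (Kp_ge0 hP hpi).
  by apply: mulr_ge0; [exact: e_ge0 | exact: ck_ge0].
have ha : 0 < e s * ckt 1 s * K s s'.
  rewrite /ck /= (e_pos_nt hs) /= mulr1.
  exact: mulr_gt0.
move: ha hb; set a := e s * _ * _; lra.
Qed.

Lemma K_out s s' : 0 < e s -> ~~ (0 < e s') -> K s s' = 0.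
Proof.
move=> hs hs'; apply/eqP; rewrite eq_le (Kp_ge0 hP hpi) andbT.
rewrite leNgt; apply/negP => hK; move: hs'; rewrite (e_closed hs hK).
by [].
Qed.

Lemma KC_sum s : 0 < e s -> \sum_(s' | 0 < e s') K s s' = 1.
Proof.
move=> hs; have := Kp_sum1 hP hpi s; rewrite (bigID (fun s' => 0 < e s')) /= => <-.
by rewrite [X in _ = _ + X]big1 ?addr0 // => s' hs'; exact: K_out.
Qed.

End Stat.

Section Escape.
Variables (R : realType) (S A : finType) (P : S -> A -> S -> R) (term : {set S}) (s0 : S).
Variables (pi : S -> A -> R) (Cp : pred S).
Hypothesis hP : is_kernel P.
Hypothesis hpi : is_policy pi.
Hypothesis hT : ProbT_finite P term s0 pi = 1.
Hypothesis hCnt : forall s, Cp s -> s \notin term.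
Hypothesis hCK : forall s, Cp s -> \sum_(s' | Cp s') Kp P pi s s' = 1.

Local Notation ckt := (@ck R S term).
Local Notation K := (@Kp R S A P pi).
Local Notation H := (@Fv R S A P s0 pi ckt).

Definition MC n := \sum_(s | Cp s) H n s.

Lemma MC_nd n : (0 < n)%N -> MC n <= MC n.+1.
Proof.
move=> hn.
have step : forall s', \sum_(s | Cp s) H n s * K s s' <= H n.+1 s'.
  move=> s'; rewrite [H n.+1 s']/= [X in _ <= X](bigID Cp) /=.
  have ha : \sum_(s | Cp s) H n s * K s s' <= \sum_(i | Cp i) H n i * ckt n i * K i s'.
    apply: ler_sum => s hs; rewrite /ck; case: (n) hn => // n' _ /=.
    by rewrite (hCnt hs) mulr1.
  set b := \sum_(i | ~~ Cp i) _.
  have hb : 0 <= b.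
    apply: sumr_ge0 => x _; apply: mulr_ge0; last exact: (Kp_ge0 hP hpi).
    by apply: mulr_ge0; [exact: (H_ge0 _ _ hP hpi) | exact: ck_ge0].
  move: ha hb; set a := \sum_(i | Cp i) H n i * ckt n i * K i s'; set c := \sum_(s | Cp s) _; lra.
apply: (le_trans _ (ler_sum _ (fun s' _ => step s'))).
rewrite exchange_big /=; apply: ler_sum => s hs.
by rewrite -mulr_sumr hCK // mulr1.
Qed.

Lemma Escape_false k z : Cp z -> 0 < H k.+1 z -> False.
Proof.
move=> hz hH.
have hMC : forall j, H k.+1 z <= MC (j + k.+1).
  elim => [|j IH].
    by rewrite add0n /MC (bigD1 z) // lerDl sumr_ge0 // => x _; exact: (H_ge0 _ _ hP hpi).
  by apply: (le_trans IH); rewrite addSn; apply: MC_nd; rewrite addnS.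
have hq : forall n, (k.+1 <= n)%N -> H k.+1 z <= \sum_s H n s.
  move=> n hn; have h1 := hMC (n - k.+1)%N; rewrite subnK // in h1.
  apply: (le_trans h1).
  rewrite /MC [X in _ <= X](bigID Cp) /= lerDl sumr_ge0 // => x _; exact: (H_ge0 _ _ hP hpi).
have hc : \sum_s H n s @[n --> \oo] --> (0 : R).
  under eq_fun do rewrite (q_eq term s0 hP hpi).
  rewrite -(subrr 1); apply: cvgB; first exact: cvg_cst.
  exact: (series_pt_cvg hP hpi hT).
have hd : (fun _ : nat => H k.+1 z) x @[x --> \oo] --> H k.+1 z by exact: cvg_cst.
have := ler_cvg_to hd hc.
have : \forall n \near \oo, H k.+1 z <= \sum_s H n s.
  by near=> n; apply: hq; near: n; exists k.+1.
move=> hn /(_ _ hn); rewrite leNgt hH //.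
Unshelve. all: by end_near.
Qed.

End Escape.
Lemma pos_sum (R : realType) (I : finType) (f : I -> R) :
  (forall i, 0 <= f i) -> 0 < \sum_i f i -> exists i, 0 < f i.
Proof.
move=> h0 hs; apply/not_existsP => hn.
have : \sum_i f i <= 0.
  apply: sumr_le0 => i _; rewrite leNgt; apply/negP => hi; exact: (hn i).
by rewrite leNgt hs.
Qed.

Lemma pos_mul (R : realType) (a b : R) : 0 <= a -> 0 <= b -> 0 < a * b -> 0 < a /\ 0 < b.
Proof.
move=> ha hb hab; split.
  by rewrite lt_def ha andbT; apply/eqP => a0; move: hab; rewrite a0 mul0r ltxx.
by rewrite lt_def hb andbT; apply/eqP => b0; move: hab; rewrite b0 mulr0 ltxx.
Qed.

Lemma le_sum_term (R : realType) (I : finType) (f : I -> R) x :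
  (forall i, 0 <= f i) -> f x <= \sum_i f i.
Proof. by move=> h; rewrite (bigD1 x) //= lerDl sumr_ge0. Qed.

Lemma Fv_ge0 (R : realType) (S A : finType) (P : S -> A -> S -> R) s0 pi c n s :
  is_kernel P -> is_policy pi -> (forall i s, 0 <= c i s) -> 0 <= Fv P s0 pi c n s.
Proof.
move=> hP hpi hc; elim: n s => [|n IH] s /=; first by rewrite ler0n.
apply: sumr_ge0 => x _; apply: mulr_ge0; last exact: (Kp_ge0 hP hpi).
by apply: mulr_ge0.
Qed.

Section Reach.
Variables (R : realType) (S A : finType) (P : S -> A -> S -> R) (term : {set S}) (s0 : S).
Variables (rho : S -> R) (pi : S -> A -> R) (d : S -> R).
Hypothesis hP : is_kernel P.
Hypothesis hpi : is_policy pi.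
Hypothesis hterm : forall s a, s \in term -> forall s', P s a s' = rho s'.
Hypothesis hs0 : s0 \in term.
Hypothesis hT : ProbT_finite P term s0 pi = 1.
Hypothesis hE : summable_stop P term s0 pi (fun n _ => n%:R).
Hypothesis hstat : is_stationary P pi d.
Hypothesis hall : forall pi', is_policy pi' -> ProbT_finite P term s0 pi' = 1.
Hypothesis hreach : forall s, exists pi', is_policy pi' /\ exists t, 0 < prob_state P s0 pi' t s.

Local Notation ckt := (@ck R S term).
Local Notation ee := (@e R S A P term s0 pi d).

Lemma ps_eq pi' t c : is_policy pi' ->
  prob_state P s0 pi' t c = Fv P s0 pi' (fun _ _ => 1) t c.
Proof.
move=> hpi'.
have e1 : prob_state P s0 pi' t c = \sum_(w : traj S A t) path_prob P s0 pi' w *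
   (\prod_(i < t) (fun _ _ => 1 : R) i (st w i)) * (fun s _ => (s == c)%:R) (st w t) (act w t).
  rewrite /prob_state big_mkcond; apply: eq_bigr => w _ /=.
  by rewrite big1 // mulr1; case: eqP; rewrite ?mulr1 ?mulr0.
rewrite e1; transitivity (\sum_s Fv P s0 pi' (fun _ _ => 1) t s * \sum_a pi' s a * (s == c)%:R).
  exact: (PP1 P s0 pi' (fun _ _ => 1) t (fun s _ => (s == c)%:R)).
rewrite (bigD1 c) //= [X in _ + X]big1 ?addr0.
  by under eq_bigr do rewrite eqxx mulr1; rewrite (pi_sum1 hpi') mulr1.
move=> s /negPf hs; rewrite big1 ?mulr0 // => a _.
by rewrite hs mulr0.
Qed.

Lemma e_zero c : ee c = 0.
Proof.
apply/eqP; rewrite eq_le (e_ge0 hP hpi hterm hs0 hT hE hstat c) andbT leNgt; apply/negP => hc.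
have [pi' [hpi' [t ht]]] := hreach c.
rewrite (ps_eq _ _ hpi') in ht.
pose Cp := fun s => 0 < ee s.
pose pi2 := fun s a => if Cp s then pi s a else pi' s a.
have hpi2 : is_policy pi2.
  by move=> s; rewrite /pi2; case: (Cp s); [exact: hpi | exact: hpi'].
have hK2C s s' : Cp s -> Kp P pi2 s s' = Kp P pi s s'.
  by move=> hs; rewrite /Kp /pi2; apply: eq_bigr => a _; rewrite hs.
have hK2N s s' : ~~ Cp s -> Kp P pi2 s s' = Kp P pi' s s'.
  by move=> hs; rewrite /Kp /pi2; apply: eq_bigr => a _; rewrite (negbTE hs).
pose H2 := Fv P s0 pi2 ckt.
pose F' := Fv P s0 pi' (fun _ _ => 1).
pose Z := exists k z, Cp z /\ 0 < H2 k.+1 z.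
have hH1 y : H2 1 y = rho y := H1 hpi2 hterm hs0 y.
have claim : forall t y, 0 < F' t y -> y \in term \/ Z \/ exists k, 0 < H2 k.+1 y.
  elim => [|t' IH] y.
    by rewrite /F' /=; case: eqP => [-> _|_]; [left | rewrite ltxx].
  rewrite /F' /= => hpos.
  have [x hx] : exists x, 0 < F' t' x * 1 * Kp P pi' x y.
    apply: pos_sum hpos => x; apply: mulr_ge0; last exact: (Kp_ge0 hP hpi').
    by rewrite mulr1; apply: Fv_ge0.
  have [hFx hKx] : 0 < F' t' x /\ 0 < Kp P pi' x y.
    apply: pos_mul; last by rewrite -[F' t' x]mulr1.
      by apply: Fv_ge0.
    exact: (Kp_ge0 hP hpi').
  have case_term : x \in term -> exists k, 0 < H2 k.+1 y.
    by move=> hxt; exists 0%N; rewrite hH1 -(Kp_term hpi' hterm y hxt).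
  case: (IH x hFx) => [hxt|[hZ|[k hk]]].
  - by right; right; exact: case_term.
  - by right; left.
  - case hCx : (Cp x).
      by right; left; exists k, x; split.
    case hxt : (x \in term); first by right; right; exact: case_term.
    right; right; exists k.+1.
    have hle : H2 k.+1 x * ckt k.+1 x * Kp P pi2 x y <= H2 k.+2 y.
      change (H2 k.+2 y) with (\sum_s H2 k.+1 s * ckt k.+1 s * Kp P pi2 s y).
      apply: (@le_sum_term R S (fun s => H2 k.+1 s * ckt k.+1 s * Kp P pi2 s y) x) => s.
      apply: mulr_ge0; last exact: (Kp_ge0 hP hpi2).
      by apply: mulr_ge0; [apply: Fv_ge0 => //; exact: ck_ge0 | exact: ck_ge0].
    apply: (lt_le_trans _ hle).
    rewrite /ck /= hxt /= mulr1 hK2N ?hCx //.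
    exact: mulr_gt0.
have hcnt : c \notin term := e_pos_nt hP hpi hterm hs0 hT hE hstat hc.
have [k [z [hz hH]]] : Z.
  case: (claim t c ht) => [hct|[hZ|[k hk]]].
  - by move: hcnt; rewrite hct.
  - exact: hZ.
  - by exists k, c; split.
have hCnt : forall s, Cp s -> s \notin term.
  by move=> s hs; exact: (e_pos_nt hP hpi hterm hs0 hT hE hstat hs).
have hCK : forall s, Cp s -> \sum_(s' | Cp s') Kp P pi2 s s' = 1.
  move=> s hs; rewrite (eq_bigr _ (fun s' _ => hK2C s s' hs)).
  exact: (KC_sum hP hpi hterm hs0 hT hE hstat hs).
exact: (Escape_false hP hpi2 (hall hpi2) hCnt hCK hz hH).
Qed.

End Reach.
Unset Implicit Arguments.
Lemma bell_sum (R : realType) (S A : finType) (P : S -> A -> S -> R) term (pi : S -> A -> R)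
  (d : S -> R) (Rw : S -> R) (Q : S -> A -> R) (c : R) :
  is_stationary P pi d ->
  \sum_s \sum_a d s * pi s a * c * bellman P term Rw Q s a =
  c * \sum_s' d s' * (Rw s' + (s' \notin term)%:R * qmax Q s').
Proof.
case=> _ hst.
set X := fun s' => Rw s' + (s' \notin term)%:R * qmax Q s'.
rewrite /bellman -/X.
transitivity (\sum_s \sum_a \sum_s' c * (P s a s' * pi s a * d s * X s')).
  apply: eq_bigr => s _; apply: eq_bigr => a _; rewrite mulr_sumr; apply: eq_bigr => s' _; rewrite /X; ring.
rewrite mulr_sumr.
transitivity (\sum_s' \sum_s \sum_a c * (P s a s' * pi s a * d s * X s')).
  rewrite [RHS]exchange_big /=; apply: eq_bigr => s _.
  by rewrite exchange_big.
apply: eq_bigr => s' _; rewrite hst mulr_suml mulr_sumr; apply: eq_bigr => s _.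
rewrite mulr_suml mulr_sumr; apply: eq_bigr => a _; rewrite /X; ring.
Qed.

Theorem mainTheorem5 (R : realType) (S A : finType)
  (P : S -> A -> S -> R) (Rw : S -> R) (rho : S -> R)
  (term : {set S}) (s0 : S)
  (hELP : is_ELP P term s0 Rw rho)
  (pi : S -> A -> R) (hpi : is_policy pi)
  (rho_pi : S -> R) (hstat : is_stationary P pi rho_pi)
  (Q : S -> A -> R) :
  let lam := fun s a => rho_pi s * pi s a * ET P term s0 pi in
  lagr P term s0 Rw pi Q lam =
    Jret P term s0 Rw pi +
    \sum_(s : S | s \notin term) \sum_(a : A) lam s a * (qmax Q s - Q s a).
Proof.
move=> lam; rewrite {}/lam.
case: hELP => -[hP _ [_ hs0] hterm hall] hreach.
have [hT hE] := hall pi hpi.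
rename rho_pi into d.
set E := ET P term s0 pi.
have hd s : d s = alpha term d * muL P term s0 pi s.
  have := e_zero hP hpi hterm hs0 hT hE hstat (fun pi' hpi' => (hall pi' hpi').1) hreach s.
  by rewrite /e; move/eqP; rewrite subr_eq0 => /eqP.
have hE1 : alpha term d * E = 1.
  rewrite /E (ET_eq hP hpi hT hE) mulr_sumr; case: hstat => -[_ <-] _.
  by apply: eq_bigr => s _; rewrite hd.
have hmu s : muL P term s0 pi s = E * d s.
  by rewrite hd mulrA (mulrC E) hE1 mul1r.
rewrite /lagr (EQT_eq hP hpi hT hE) (J_eq hP hpi hT hE).
under eq_bigr do rewrite hmu.
under [in RHS]eq_bigr do rewrite hmu.
rewrite [X in _ + X = _](eq_bigr (fun s => \sum_a (d s * pi s a * E * bellman P term Rw Q s a - d s * pi s a * E * Q s a))); last first.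
  by move=> s _; apply: eq_bigr => a _; ring.
rewrite [X in _ + X = _](eq_bigr (fun s => \sum_a d s * pi s a * E * bellman P term Rw Q s a - \sum_a d s * pi s a * E * Q s a)); last first.
  by move=> s _; rewrite sumrB.
rewrite sumrB bell_sum //.
rewrite [in RHS](big_mkcond (fun s => s \notin term)) /=.
rewrite !mulr_sumr -!sumrB -!big_split /=; apply: eq_bigr => s _.
have hQ : \sum_a d s * pi s a * E * Q s a = E * d s * \sum_a pi s a * Q s a.
  by rewrite mulr_sumr; apply: eq_bigr => a _; ring.
have hf : \sum_a pi s a * (Q s a * @tau R S term s) = @tau R S term s * \sum_a pi s a * Q s a.
  by rewrite mulr_sumr; apply: eq_bigr => a _; ring.
have hqm : \sum_a d s * pi s a * E * (qmax Q s - Q s a) =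
           E * d s * qmax Q s - E * d s * \sum_a pi s a * Q s a.
  rewrite -hQ -[E * d s * qmax Q s]mulr1 -(pi_sum1 hpi s) mulr_sumr -sumrB.
  by apply: eq_bigr => a _; ring.
rewrite hQ hf /tau; case: (s \in term) => /=; rewrite ?hqm; ring.
Qed.
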